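(* Let $1\le r\le s\le t$ and let $u=ABCd$, $v=A'B'C'd'$ be vertices of $E3C(r,s,t)$ with $A\ne A'$, $B=B'$, $C=C'$ and $d\ne d'$. Then there exist $2r+2$ pairwise internally disjoint $u$–$v$ paths in $E3C(r,s,t)$, each of length at most $r+8$ if $\{d,d'\}=\{0,1\}$, and each of length at most $r+6$ if $\{d,d'\}=\{0,2\}$ or $\{d,d'\}=\{1,2\}$.
   Context: The exchanged 3-ary $n$-cube $E3C(r,s,t)$ ($r,s,t\ge1$, $n=r+s+t+1$): vertices are strings written $x=ABCd$ with $A\in\{0,1,2\}^r$, $B\in\{0,1,2\}^s$, $C\in\{0,1,2\}^t$, $d\in\{0,1,2\}$. Two distinct vertices $x=ABCd$, $y=A'B'C'd'$ are adjacent iff one of: (E0) $A=A',B=B',C=C'$ and $d\ne d'$; (E1) $d=d'=0$, $A=A'$, $B=B'$ and $C,C'$ differ in exactly one position; (E2) $d=d'=1$, $A=A'$, $C=C'$ and $B,B'$ differ in exactly one position; (E3) $d=d'=2$, $B=B'$, $C=C'$ and $A,A'$ differ in exactly one position. Paths are internally disjoint if they share no vertices other than their endpoints; length = number of edges. *)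

(* Defs.v *)
From mathcomp Require Import all_boot.
Set Implicit Arguments. Unset Strict Implicit. Unset Printing Implicit Defensive.

Definition word (k : nat) := {ffun 'I_k -> 'I_3}.
Definition e3c_vertex (r s t : nat) : finType :=
  (word r * word s * word t * 'I_3)%type.

Definition vA r s t (x : e3c_vertex r s t) : word r := x.1.1.1.
Definition vB r s t (x : e3c_vertex r s t) : word s := x.1.1.2.
Definition vC r s t (x : e3c_vertex r s t) : word t := x.1.2.
Definition vd r s t (x : e3c_vertex r s t) : 'I_3 := x.2.

Definition differ1 k (a b : word k) : bool := #|[set i | a i != b i]| == 1.

Definition e3c_adj r s t (x y : e3c_vertex r s t) : bool :=
  (x != y) &&
  [|| [&& vA x == vA y, vB x == vB y, vC x == vC y & vd x != vd y]
    , [&& (vd x == 0 :> nat), (vd y == 0 :> nat), vA x == vA y, vB x == vB y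
          & differ1 (vC x) (vC y)]
    , [&& (vd x == 1 :> nat), (vd y == 1 :> nat), vA x == vA y, vC x == vC y
          & differ1 (vB x) (vB y)]
    | [&& (vd x == 2 :> nat), (vd y == 2 :> nat), vB x == vB y, vC x == vC y
          & differ1 (vA x) (vA y)]].

(* A u-v path is a vertex sequence u :: p (ending in v) without repeated
   vertices whose consecutive vertices are adjacent; its length is size p. *)
Definition is_path r s t (u v : e3c_vertex r s t) (p : seq (e3c_vertex r s t)) : bool :=
  [&& path (@e3c_adj r s t) u p, last u p == v & uniq (u :: p)].

Definition interior r s t (p : seq (e3c_vertex r s t)) : seq (e3c_vertex r s t) :=
  take (size p).-1 p.

Definition int_disjoint_paths r s t (u v : e3c_vertex r s t)
    (P : seq (seq (e3c_vertex r s t))) : bool :=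
  [&& all (is_path u v) P, uniq P &
      [forall i : 'I_(size P), forall j : 'I_(size P),
         (i != j) ==> ~~ has (mem (interior (nth [::] P i))) (interior (nth [::] P j))]].

Definition dset_is r s t (u v : e3c_vertex r s t) (a b : nat) : bool :=
  ((vd u == a :> nat) && (vd v == b :> nat)) ||
  ((vd u == b :> nat) && (vd v == a :> nat)).

(* Main.v *)
Require Import Defs.
From mathcomp Require Import all_boot zify.
Set Implicit Arguments. Unset Strict Implicit. Unset Printing Implicit Defensive.

Definition alt (x : 'I_3) (b : bool) : 'I_3 := inord ((x + 1 + b) %% 3).

Lemma alt_neq x b : alt x b != x.
Proof. by case: x => [[|[|[|?]]] Hx] //; case: b; apply/eqP; move/(congr1 val); rewrite /= inordK. Qed.

Lemma alt_inj x : injective (alt x).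
Proof. by case: x => [[|[|[|?]]] Hx] //; case; case => //; move/(congr1 val); rewrite /= !inordK. Qed.

Lemma alt_surj x y : y != x -> exists b, y = alt x b.
Proof.
case: x => [[|[|[|?]]] Hx] //; case: y => [[|[|[|?]]] Hy] // _;
 solve [exists false; apply/val_inj; rewrite /= inordK // |
        exists true; apply/val_inj; rewrite /= inordK //].
Qed.

Definition nb k (w : word k) (i : 'I_k) (b : bool) : word k :=
  [ffun j => if j == i then alt (w i) b else w j].

Lemma differ1_sym k (a b : word k) : differ1 a b = differ1 b a.
Proof.
rewrite /differ1 (_ : [set i | a i != b i] = [set i | b i != a i]) //.
by apply/setP => i; rewrite !inE eq_sym.
Qed.

Lemma differ1_neq k (a b : word k) : differ1 a b -> a != b.
Proof.
rewrite /differ1; apply: contraL => /eqP ->.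
by rewrite (_ : [set i | b i != b i] = set0) ?cards0 //; apply/setP => i; rewrite !inE eqxx.
Qed.

Lemma diff_nb k (w : word k) i b : [set j | w j != nb w i b j] = [set i].
Proof.
apply/setP => j; rewrite !inE ffunE; case: (j =P i) => [->|_]; last by rewrite eqxx.
by rewrite eq_sym alt_neq.
Qed.

Lemma differ1_nb k (w : word k) i b : differ1 w (nb w i b).
Proof. by rewrite /differ1 diff_nb cards1. Qed.

Lemma nb_neq k (w : word k) i b : nb w i b != w.
Proof. by rewrite eq_sym; apply: differ1_neq; apply: differ1_nb. Qed.

Lemma nb_inj k (w : word k) i b i' b' : nb w i b = nb w i' b' -> (i, b) = (i', b').
Proof.
move=> E.
have Ei : i = i'.
  apply/eqP; apply: contraT => ne.
  have := congr1 (fun f : word k => f i) E; rewrite /= !ffunE eqxx (negbTE ne) => /eqP.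
  by rewrite (negbTE (alt_neq _ _)).
subst i'; congr pair; apply: (@alt_inj (w i)).
by have := congr1 (fun f : word k => f i) E; rewrite /= !ffunE eqxx.
Qed.

Lemma differ1_ex k (a c : word k) : differ1 a c -> exists i b, c = nb a i b.
Proof.
rewrite /differ1 => /cards1P [i Hi].
have Hj j : (a j != c j) = (j == i) by rewrite -in_set1 -Hi inE.
have := Hj i; rewrite eqxx eq_sym => /alt_surj[b Hb].
exists i, b; apply/ffunP => j; rewrite ffunE; case: eqP => [->|/eqP ne] //.
by apply/eqP; rewrite eq_sym; apply/negP => /negP; rewrite Hj (negbTE ne).
Qed.

Lemma path_iota (e : rel nat) a n :
  (forall m, a <= m -> m < a + n -> e m m.+1) -> path e a (iota a.+1 n).
Proof.
elim: n a => [|n IH] a H /=; first done.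
apply/andP; split; first by apply: H; rewrite // addnS ltnS leq_addr.
apply: IH => m le lt; apply: H; first exact: ltnW.
by rewrite addnS -addSn.
Qed.

Section Route.
Variables (k : nat) (X Y : word k).

Definition dlist := [seq j <- enum 'I_k | X j != Y j].
Definition upd m : word k := [ffun j => if j \in take m dlist then Y j else X j].
Definition route := map upd (iota 1 (size dlist)).

Lemma mem_dlist j : (j \in dlist) = (X j != Y j).
Proof. by rewrite mem_filter mem_enum andbT. Qed.

Lemma uniq_dlist : uniq dlist.
Proof. by rewrite filter_uniq // enum_uniq. Qed.

Lemma upd0 : upd 0 = X.
Proof. by apply/ffunP => j; rewrite ffunE take0. Qed.

Lemma upd_size : upd (size dlist) = Y.
Proof.
apply/ffunP => j; rewrite ffunE take_size mem_dlist.
by case: eqP => // ->.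
Qed.

Lemma take_nth_mem j0 m n : m < size dlist ->
  (nth j0 dlist m \in take n dlist) = (m < n).
Proof.
move=> lt; rewrite in_take ?mem_nth // index_uniq //; exact: uniq_dlist.
Qed.

Lemma upd_step m : m < size dlist -> differ1 (upd m) (upd m.+1).
Proof.
move=> lt; have j0 : 'I_k by case: dlist lt => // j.
rewrite /differ1 (_ : [set j | upd m j != upd m.+1 j] = [set nth j0 dlist m]) ?cards1 //.
apply/setP => j; rewrite !inE !ffunE (take_nth j0 lt) mem_rcons inE.
case: (j =P nth j0 dlist m) => [->|ne] /=.
  rewrite take_nth_mem // ltnn /=.
  by rewrite -mem_dlist mem_nth.
by rewrite eqxx.
Qed.

Lemma upd_neq m n : m < n -> n <= size dlist -> upd m != upd n.
Proof.
move=> lt le; have lt' : m < size dlist by apply: leq_trans le.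
have j0 : 'I_k by case: dlist lt' => // j.
apply/negP => /eqP /(congr1 (fun f : word k => f (nth j0 dlist m))).
rewrite !ffunE !take_nth_mem // ltnn lt => E.
by move: (mem_nth j0 lt'); rewrite mem_dlist E eqxx.
Qed.

Lemma upd_far m i b : 1 < m -> m <= size dlist -> upd m != nb X i b.
Proof.
move=> lt le; have j0 : 'I_k by case: dlist le lt => [|j]; [case: m|].
apply/negP => /eqP EE.
have H p : p < m -> nth j0 dlist p = i.
  move=> pm; have ps : p < size dlist by apply: leq_trans le.
  apply/eqP; apply: contraT => ne.
  move: (congr1 (fun f : word k => f (nth j0 dlist p)) EE).
  rewrite !ffunE take_nth_mem // pm (negbTE ne) => E.
  by move: (mem_nth j0 ps); rewrite mem_dlist E eqxx.
have E : nth j0 dlist 0 = nth j0 dlist 1 by rewrite !H // ltnW.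
have l0 : 0 < size dlist by apply: leq_trans le; apply: ltnW.
have l1 : 1 < size dlist by apply: leq_trans le.
by move: (nth_uniq j0 l0 l1 uniq_dlist); rewrite E eqxx.
Qed.

Lemma route_path : path (@differ1 k) X route.
Proof.
rewrite /route -[X in path _ X]upd0 path_map; apply: path_iota => m _ lt.
exact: upd_step.
Qed.

Lemma route_last : last X route = Y.
Proof.
rewrite /route -[X in last X _]upd0 last_map -upd_size; congr upd.
case: (size dlist) => // n.
by rewrite -(addn1 n) iotaD last_cat /= addnC.
Qed.

Lemma route_uniq : uniq (X :: route).
Proof.
rewrite -[X in X :: _]upd0 /route.
change (uniq (map upd (iota 0 (size dlist).+1))).
rewrite map_inj_in_uniq ?iota_uniq // => x y; rewrite !mem_iota !add0n !ltnS => /= hx hy E.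
case: (ltngtP x y) => // lt.
  by move: (upd_neq lt hy); rewrite E eqxx.
by move: (upd_neq lt hx); rewrite E eqxx.
Qed.

Lemma route_size : size route <= k.
Proof.
rewrite size_map size_iota /dlist size_filter (leq_trans (count_size _ _)) //.
by rewrite size_enum_ord.
Qed.

Lemma route_cons : X != Y -> exists Z rest, route = Z :: rest /\ differ1 X Z /\
   (forall W, W \in rest -> forall i b, W != nb X i b).
Proof.
move=> ne.
have : 0 < size dlist.
  rewrite lt0n; apply: contra ne => /eqP s0.
  by rewrite -upd0 -upd_size s0.
case E: (size dlist) => [|n] // _.
exists (upd 1), (map upd (iota 2 n)); split; first by rewrite /route E.
split; first by rewrite -[X in differ1 X _]upd0; apply: upd_step; rewrite E.
move=> W /mapP [m]; rewrite mem_iota => /andP [h1 h2] -> i b.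
by apply: upd_far => //; rewrite E; move: h2; rewrite addnC addn2.
Qed.
End Route.

Definition d0 : 'I_3 := @Ordinal 3 0 isT.
Definition d1 : 'I_3 := @Ordinal 3 1 isT.
Definition d2 : 'I_3 := @Ordinal 3 2 isT.

Lemma d01 : (d0 == d1) = false. Proof. by []. Qed.
Lemma d02 : (d0 == d2) = false. Proof. by []. Qed.
Lemma d12 : (d1 == d2) = false. Proof. by []. Qed.
Lemma d10 : (d1 == d0) = false. Proof. by []. Qed.
Lemma d20 : (d2 == d0) = false. Proof. by []. Qed.
Lemma d21 : (d2 == d1) = false. Proof. by []. Qed.

Section Vtx.
Variables r s t : nat.
Local Notation V := (e3c_vertex r s t).

Lemma vtx_eq (A A' : word r) (B B' : word s) (C C' : word t) (d d' : 'I_3) :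
  (((A, B, C, d) : V) == (A', B', C', d')) = [&& A == A', B == B', C == C' & d == d'].
Proof. by rewrite !xpair_eqE !andbA. Qed.

Lemma adj_sym (x y : V) : e3c_adj x y = e3c_adj y x.
Proof.
move: x y => [[[A B] C] d] [[[A' B'] C'] d'].
rewrite /e3c_adj /vA /vB /vC /vd /= [(A', B', C', d') == _]eq_sym.
rewrite [A' == A]eq_sym [B' == B]eq_sym [C' == C]eq_sym [d' == d]eq_sym.
rewrite (differ1_sym C') (differ1_sym B') (differ1_sym A').
by congr (_ && [|| _, _, _ | _]); rewrite andbCA.
Qed.

Lemma adj0 A B C (d d' : 'I_3) : d != d' -> e3c_adj ((A, B, C, d) : V) (A, B, C, d').
Proof. by move=> ne; rewrite /e3c_adj vtx_eq /vA /vB /vC /vd /= !eqxx ne. Qed.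

Lemma adjC A B C C' : differ1 C C' -> e3c_adj ((A, B, C, d0) : V) (A, B, C', d0).
Proof.
by move=> h; rewrite /e3c_adj vtx_eq /vA /vB /vC /vd /= !eqxx (negbTE (differ1_neq h)) h.
Qed.

Lemma adjB A B B' C : differ1 B B' -> e3c_adj ((A, B, C, d1) : V) (A, B', C, d1).
Proof.
by move=> h; rewrite /e3c_adj vtx_eq /vA /vB /vC /vd /= !eqxx (negbTE (differ1_neq h)) h ?orbT.
Qed.

Lemma adjA A A' B C : differ1 A A' -> e3c_adj ((A, B, C, d2) : V) (A', B, C, d2).
Proof.
by move=> h; rewrite /e3c_adj vtx_eq /vA /vB /vC /vd /= !eqxx (negbTE (differ1_neq h)) h ?orbT.
Qed.

Definition lay2 (B : word s) (C : word t) (X : word r) : V := (X, B, C, d2).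

Lemma path_lay2 B C X Y :
  path (@e3c_adj r s t) (lay2 B C X) (map (lay2 B C) (route X Y)).
Proof.
rewrite path_map; apply: sub_path (route_path X Y) => a b /= h.
exact: adjA.
Qed.

Lemma last_lay2 B C X Y : last (lay2 B C X) (map (lay2 B C) (route X Y)) = lay2 B C Y.
Proof. by rewrite last_map route_last. Qed.

Lemma mem_lay2 B C X (A : word r) B' C' d :
  (((A, B', C', d) : V) \in map (lay2 B C) X) = [&& A \in X, B' == B, C' == C & d == d2].
Proof.
apply/mapP/idP => [[Z hZ]|]; first by case=> -> -> -> ->; rewrite hZ !eqxx.
by case/and4P => h /eqP -> /eqP -> /eqP ->; exists A.
Qed.

End Vtx.

Section Gen.
Variables r s t : nat.
Local Notation V := (e3c_vertex r s t).

Lemma interior_rcons (q : seq V) x : interior (rcons q x) = q.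
Proof. by rewrite /interior size_rcons /= -cats1 take_size_cat. Qed.

Lemma tag_disj (I : eqType) (idx : seq I) (q : I -> seq V) (tag : V -> I) (u v : V) :
  uniq idx ->
  (forall j, j \in idx -> is_path u v (rcons (q j) v)) ->
  (forall j, j \in idx -> q j != [::]) ->
  (forall j, j \in idx -> forall x, x \in q j -> tag x = j) ->
  int_disjoint_paths u v [seq rcons (q j) v | j <- idx].
Proof.
move=> Ui Hp Hn Ht; apply/and3P; split.
- by apply/allP => p /mapP [j hj ->]; apply: Hp.
- rewrite map_inj_in_uniq // => j j' hj hj' E.
  have := Hn _ hj; case E1: (q j) => [|x l] // _.
  have := rcons_inj E => [[E2]].
  by rewrite -(Ht _ hj x) ?E1 ?inE ?eqxx // (Ht _ hj') // -E2 E1 inE eqxx.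
- apply/forallP => i; apply/forallP => j; apply/implyP => ne.
  have hi : i < size idx by rewrite -(size_map (fun j => rcons (q j) v)) ltn_ord.
  have hj : j < size idx by rewrite -(size_map (fun j => rcons (q j) v)) ltn_ord.
  have /hasP[x0 _ _] : has predT idx by rewrite has_predT (leq_ltn_trans _ hi).
  rewrite !(nth_map x0) // !interior_rcons.
  apply/hasPn => x hx; apply/negP => hx'.
  have e1 := Ht _ (mem_nth x0 hi) _ hx'.
  have e2 := Ht _ (mem_nth x0 hj) _ hx.
  move: ne; rewrite -(inj_eq val_inj) /=.
  by rewrite -(nth_uniq x0 hi hj Ui) -e1 -e2 eqxx.
Qed.

Lemma is_path_rcons (u v : V) q :
  path (@e3c_adj r s t) u (rcons q v) -> uniq (u :: rcons q v) -> is_path u v (rcons q v).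
Proof. by move=> h1 h2; rewrite /is_path h1 h2 last_rcons eqxx. Qed.
End Gen.

Lemma uniq_ins (T : eqType) (s1 s2 M : seq T) :
  uniq (s1 ++ s2) -> uniq M -> all (fun y => y \notin M) (s1 ++ s2) -> uniq (s1 ++ M ++ s2).
Proof.
move=> u1 u2 h.
have P : perm_eq (s1 ++ M ++ s2) (M ++ s1 ++ s2) by rewrite perm_catCA.
rewrite (perm_uniq P) cat_uniq u1 u2 andbT /=.
by apply/hasPn => y hy; move/allP: h => /(_ y hy).
Qed.

Section Case01.
Variables (r s t : nat) (hrs : r <= s) (hrt : r <= t).
Local Notation V := (e3c_vertex r s t).
Local Notation I := (option (option ('I_r * bool))).
Variables (A A' : word r) (B : word s) (C : word t) (ib0 : 'I_r * bool).
Hypothesis hAA : A != A'.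

Definition Bn (ib : 'I_r * bool) := nb B (widen_ord hrs ib.1) ib.2.
Definition Cn (ib : 'I_r * bool) := nb C (widen_ord hrt ib.1) ib.2.

Lemma Bn_inj ib ib' : (Bn ib == Bn ib') = (ib == ib').
Proof.
apply/eqP/eqP => [|-> //]; move: ib ib' => [i b] [i' b'] /nb_inj [h ->].
by congr pair; apply: val_inj; exact: h.
Qed.
Lemma Cn_inj ib ib' : (Cn ib == Cn ib') = (ib == ib').
Proof.
apply/eqP/eqP => [|-> //]; move: ib ib' => [i b] [i' b'] /nb_inj [h ->].
by congr pair; apply: val_inj; exact: h.
Qed.
Lemma BnB ib : (Bn ib == B) = false. Proof. exact: negbTE (nb_neq _ _ _). Qed.
Lemma BBn ib : (B == Bn ib) = false. Proof. by rewrite eq_sym BnB. Qed.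
Lemma CnC ib : (Cn ib == C) = false. Proof. exact: negbTE (nb_neq _ _ _). Qed.
Lemma CCn ib : (C == Cn ib) = false. Proof. by rewrite eq_sym CnC. Qed.

Definition optS (o : option ('I_r * bool)) : I := if o is Some ib then Some (Some ib) else None.
Definition pickB (B' : word s) := [pick ib | B' == Bn ib].
Definition pickC (C' : word t) := [pick ib | C' == Cn ib].
Lemma pickB_Bn ib : pickB (Bn ib) = Some ib.
Proof. rewrite /pickB; case: pickP => [ib' |/(_ ib)]; rewrite ?Bn_inj ?eqxx //; by move/eqP ->. Qed.
Lemma pickC_Cn ib : pickC (Cn ib) = Some ib.
Proof. rewrite /pickC; case: pickP => [ib' |/(_ ib)]; rewrite ?Cn_inj ?eqxx //; by move/eqP ->. Qed.

Lemma AA' : (A == A') = false. Proof. exact: negbTE. Qed.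
Lemma A'A : (A' == A) = false. Proof. by rewrite eq_sym AA'. Qed.
Lemma AR : (A \in route A A') = false.
Proof. by have := route_uniq A A'; rewrite cons_uniq => /andP [/negbTE]. Qed.
Lemma uR : uniq (route A A'). Proof. by have := route_uniq A A'; rewrite cons_uniq => /andP []. Qed.
Lemma uMR (B1 : word s) (C1 : word t) : uniq (map (@lay2 r s t B1 C1) (route A A')).
Proof. by rewrite map_inj_uniq ?uR // => X Y []. Qed.
Lemma A'R : A' \in A :: route A A'.
Proof. by rewrite -[X in X \in _](route_last A A') mem_last. Qed.
Lemma A'R' : (A' \in route A A') = true.
Proof. by have := A'R; rewrite inE A'A. Qed.


Local Notation R := (route A A').
Local Notation adj := (@e3c_adj r s t).

Lemma shape_ok (u v : V) s1 Bx Cx s2 :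
  path adj u s1 -> last u s1 = lay2 Bx Cx A -> path adj (lay2 Bx Cx A') (rcons s2 v) ->
  uniq (u :: s1 ++ rcons s2 v) ->
  all (fun y => y \notin map (lay2 Bx Cx) R) (u :: s1 ++ rcons s2 v) ->
  is_path u v (rcons (s1 ++ map (lay2 Bx Cx) R ++ s2) v).
Proof.
move=> p1 l1 p2 un al; apply: is_path_rcons.
  rewrite !rcons_cat !cat_path p1 l1 path_lay2 /=.
  by rewrite last_lay2.
rewrite !rcons_cat -cat_cons; apply: uniq_ins => //; exact: uMR.
Qed.

Lemma size_shape (s1 : seq V) Bx Cx s2 (v : V) :
  size (rcons (s1 ++ map (lay2 Bx Cx) R ++ s2) v) <= size s1 + size s2 + 1 + r.
Proof.
have := route_size A A'; rewrite size_rcons !size_cat size_map; lia.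
Qed.


Definition u01 : V := (A, B, C, d0).
Definition v01 : V := (A', B, C, d1).

Definition q01 (j : I) : seq V :=
 match j with
 | None => [:: (A, B, C, d2)] ++ map (lay2 B C) R ++ [::]
 | Some None => [:: (A, B, C, d1); (A, Bn ib0, C, d1); (A, Bn ib0, C, d2)]
      ++ map (lay2 (Bn ib0) C) R ++ [:: (A', Bn ib0, C, d1)]
 | Some (Some ib) => if ib == ib0 then
      [:: (A, B, Cn ib0, d0); (A, B, Cn ib0, d2)] ++ map (lay2 B (Cn ib0)) R
        ++ [:: (A', B, Cn ib0, d0); (A', B, C, d0)]
    else [:: (A, B, Cn ib, d0); (A, B, Cn ib, d1); (A, Bn ib, Cn ib, d1);
             (A, Bn ib, Cn ib, d0); (A, Bn ib, C, d0); (A, Bn ib, C, d2)]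
      ++ map (lay2 (Bn ib) C) R ++ [:: (A', Bn ib, C, d1)]
 end.

Definition tag01 (x : V) : I :=
  let: (X, B', C', l) := x in
  if B' == B then
    if C' == C then (if l == d2 then None else if l == d1 then Some None else Some (Some ib0))
    else if l == d2 then Some (Some ib0) else optS (pickC C')
  else if B' == Bn ib0 then Some None else optS (pickB B').

Lemma dBn ib : differ1 B (Bn ib). Proof. exact: differ1_nb. Qed.
Lemma dBn' ib : differ1 (Bn ib) B. Proof. by rewrite differ1_sym dBn. Qed.
Lemma dCn ib : differ1 C (Cn ib). Proof. exact: differ1_nb. Qed.
Lemma dCn' ib : differ1 (Cn ib) C. Proof. by rewrite differ1_sym dCn. Qed.
Ltac dif := first [exact: dBn | exact: dBn' | exact: dCn | exact: dCn'].
Ltac adj1 := match goal with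
 | |- is_true (e3c_adj (?a, ?b, ?c, _) (?a, ?b, ?c, _)) => apply: adj0; by []
 | |- is_true (e3c_adj (?a, ?b, _, _) (?a, ?b, _, _)) => apply: adjC; dif
 | |- is_true (e3c_adj (?a, _, ?c, _) (?a, _, ?c, _)) => apply: adjB; dif
 end.
Ltac adjt := rewrite ?andbT; repeat (match goal with |- is_true (_ && _) => apply/andP; split; [adj1|] end); adj1.

Ltac simp := rewrite ?inE ?mem_lay2 ?vtx_eq ?eqxx ?d01 ?d02 ?d10 ?d12 ?d20 ?d21
  ?AA' ?A'A ?AR ?A'R' ?BnB ?BBn ?CnC ?CCn ?Bn_inj ?Cn_inj /= ?andbF ?andbT; try done.

Lemma q01_None : is_path u01 v01 (rcons (q01 None) v01).
Proof.
apply: shape_ok; rewrite /u01 /v01 //=.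
- rewrite /lay2; adjt.
- rewrite /lay2; adjt.
- simp.
- simp.
Qed.

Lemma q01_SN : is_path u01 v01 (rcons (q01 (Some None)) v01).
Proof.
apply: shape_ok; rewrite /u01 /v01 //=.
- rewrite /lay2; adjt.
- rewrite /lay2; adjt.
- simp.
- simp.
Qed.

Lemma q01_S0 : is_path u01 v01 (rcons (q01 (Some (Some ib0))) v01).
Proof.
rewrite /q01 eqxx; apply: shape_ok; rewrite /u01 /v01 //=.
- rewrite /lay2; adjt.
- rewrite /lay2; adjt.
- simp.
- simp.
Qed.

Lemma q01_S ib : ib != ib0 -> is_path u01 v01 (rcons (q01 (Some (Some ib))) v01).
Proof.
move=> ne; have ne1 := negbTE ne; have ne2 : (ib0 == ib) = false by rewrite eq_sym.
rewrite /q01 ne1; apply: shape_ok; rewrite /u01 /v01 //=.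
- rewrite /lay2; adjt.
- rewrite /lay2; adjt.
- simp; rewrite ?ne1 ?ne2 //.
- simp; rewrite ?ne1 ?ne2 //.
Qed.

Lemma all_mapT (f : word r -> V) (P : pred V) l : (forall X, P (f X)) -> all P (map f l).
Proof. by move=> H; apply/allP => x /mapP [X _ ->]. Qed.

Ltac tsimp := rewrite /= ?eqxx ?d01 ?d02 ?d10 ?d12 ?d20 ?d21 ?BnB ?BBn ?CnC ?CCn
   ?Bn_inj ?Cn_inj ?pickB_Bn ?pickC_Cn /= ?eqxx.

Lemma q01_tag j : all (fun x => tag01 x == j) (q01 j).
Proof.
case: j => [[ib|]|]; rewrite /q01; last first.
- rewrite !all_cat; apply/and3P; split; [tsimp; done | apply: all_mapT => X; tsimp; done | done].
- rewrite !all_cat; apply/and3P; split; [tsimp; done | apply: all_mapT => X; tsimp; done | tsimp; done].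
case: ifP => [/eqP -> | ne1].
- rewrite !all_cat; apply/and3P; split; [tsimp; done | apply: all_mapT => X; tsimp; done | tsimp; done].
- have ne2 : (ib0 == ib) = false by rewrite eq_sym ne1.
  rewrite !all_cat; apply/and3P; split; [tsimp; rewrite ?ne1 ?ne2 /= ?eqxx ?pickB_Bn ?pickC_Cn; done
  | apply: all_mapT => X; tsimp; rewrite ?ne1 ?ne2 /= ?pickB_Bn ?eqxx; done | tsimp; rewrite ?ne1 ?ne2 /= ?pickB_Bn ?eqxx; done].
Qed.
Lemma q01_path j : is_path u01 v01 (rcons (q01 j) v01).
Proof.
case: j => [[ib|]|]; [|exact: q01_SN|exact: q01_None].
case: (eqVneq ib ib0) => [->|ne]; [exact: q01_S0 | exact: q01_S].
Qed.

Lemma q01_size j : size (rcons (q01 j) v01) <= r + 8.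
Proof.
case: j => [[ib|]|]; rewrite /q01; try case: ifP => _;
  (apply: leq_trans (size_shape _ _ _ _ _) _; rewrite /= addnC leq_add2l //).
Qed.

Lemma card_I : #|{: I}| = 2 * r + 2.
Proof. rewrite !card_option card_prod card_ord card_bool; lia. Qed.

Lemma case01 : exists P : seq (seq V),
  [/\ size P = 2 * r + 2, int_disjoint_paths u01 v01 P &
      forall p, p \in P -> size p <= r + 8].
Proof.
exists [seq rcons (q01 j) v01 | j <- enum {: I}]; split.
- by rewrite size_map -cardE card_I.
- apply: (tag_disj (tag:=tag01)).
  + exact: enum_uniq.
  + by move=> j _; apply: q01_path.
  + by move=> j _; case: j => [[ib|]|] //=; case: ifP.
  + by move=> j _ x hx; apply/eqP; move/allP: (q01_tag j); apply.
- by move=> p /mapP [j _ ->]; apply: q01_size.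
Qed.
End Case01.

Section Case20.
Variables (r s t : nat) (hrs : r <= s) (hrt : r <= t).
Local Notation V := (e3c_vertex r s t).
Local Notation I := (option (option ('I_r * bool))).
Variables (A A' : word r) (B : word s) (C : word t) (ib0 : 'I_r * bool) (rest : seq (word r)).
Hypothesis hAA : A != A'.
Local Notation R := (route A A').
Local Notation adj := (@e3c_adj r s t).
Definition Ab (ib : 'I_r * bool) := nb A ib.1 ib.2.
Hypothesis hR : R = Ab ib0 :: rest.
Hypothesis hrest : forall W, W \in rest -> forall i b, W != nb A i b.
Local Notation Bn := (Bn hrs B).
Local Notation Cn := (Cn hrt C).
Local Notation pickC := (pickC hrt C).
Local Notation optS := (@optS r).

Lemma notin_route k (X Y : word k) : (X \in route X Y) = false.
Proof. by have := route_uniq X Y; rewrite cons_uniq => /andP [/negbTE]. Qed.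

Lemma shape_gen (u v : V) X s1 Bx Cx s2 :
  path adj u s1 -> last u s1 = lay2 Bx Cx X -> path adj (lay2 Bx Cx A') (rcons s2 v) ->
  uniq (u :: s1 ++ rcons s2 v) ->
  all (fun y => y \notin map (lay2 Bx Cx) (route X A')) (u :: s1 ++ rcons s2 v) ->
  is_path u v (rcons (s1 ++ map (lay2 Bx Cx) (route X A') ++ s2) v).
Proof.
move=> p1 l1 p2 un al; apply: is_path_rcons.
  rewrite !rcons_cat !cat_path p1 l1 path_lay2 /=.
  by rewrite last_lay2.
rewrite !rcons_cat -cat_cons; apply: uniq_ins => //.
rewrite map_inj_uniq; last by move=> ? ? [].
by have := route_uniq X A'; rewrite cons_uniq => /andP [].
Qed.

Lemma size_gen (s1 : seq V) X Bx Cx s2 (v : V) :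
  size (rcons (s1 ++ map (lay2 Bx Cx) (route X A') ++ s2) v) <= size s1 + size s2 + 1 + r.
Proof.
have := route_size X A'; rewrite size_rcons !size_cat size_map; lia.
Qed.

Definition pickA (X : word r) := [pick ib | X == Ab ib].
Lemma Ab_inj ib ib' : (Ab ib == Ab ib') = (ib == ib').
Proof. by apply/eqP/eqP => [|-> //]; move: ib ib' => [i b] [i' b'] /nb_inj. Qed.
Lemma pickA_Ab ib : pickA (Ab ib) = Some ib.
Proof. rewrite /pickA; case: pickP => [ib' |/(_ ib)]; rewrite ?Ab_inj ?eqxx //; by move/eqP ->. Qed.
Lemma pickA_rest W : W \in rest -> pickA W = None.
Proof.
move=> hW; rewrite /pickA; case: pickP => // [[i b]] /eqP E.
by move: (hrest hW i b); rewrite E /Ab eqxx.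
Qed.
Lemma AbA ib : (Ab ib == A) = false. Proof. exact: negbTE (nb_neq _ _ _). Qed.
Lemma AAb ib : (A == Ab ib) = false. Proof. by rewrite eq_sym AbA. Qed.
Lemma AbA' ib : ib != ib0 -> (Ab ib == A') = false.
Proof.
move=> ne; apply/negP => /eqP E.
have : A' \in R.
  by have := mem_last A R; rewrite route_last inE eq_sym (negbTE hAA).
rewrite hR inE => /orP [/eqP|] .
  by rewrite -E => /eqP; rewrite Ab_inj (negbTE ne).
by move/hrest => /(_ ib.1 ib.2); rewrite -E /Ab eqxx.
Qed.
Lemma AA'2 : (A == A') = false. Proof. exact: negbTE. Qed.
Lemma A'A2 : (A' == A) = false. Proof. by rewrite eq_sym AA'2. Qed.

Lemma dAb ib : differ1 A (Ab ib). Proof. exact: differ1_nb. Qed.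
Lemma dBn2 ib : differ1 B (Bn ib). Proof. exact: differ1_nb. Qed.
Lemma dBn2' ib : differ1 (Bn ib) B. Proof. by rewrite differ1_sym dBn2. Qed.
Lemma dCn2 ib : differ1 C (Cn ib). Proof. exact: differ1_nb. Qed.
Lemma dCn2' ib : differ1 (Cn ib) C. Proof. by rewrite differ1_sym dCn2. Qed.
Ltac dif := first [exact: dBn2 | exact: dBn2' | exact: dCn2 | exact: dCn2' | exact: dAb].
Ltac adj1 := match goal with
 | |- is_true (e3c_adj (?a, ?b, ?c, _) (?a, ?b, ?c, _)) => apply: adj0; by []
 | |- is_true (e3c_adj (?a, ?b, _, _) (?a, ?b, _, _)) => apply: adjC; dif
 | |- is_true (e3c_adj (?a, _, ?c, _) (?a, _, ?c, _)) => apply: adjB; dif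
 | |- is_true (e3c_adj (_, ?b, ?c, _) (_, ?b, ?c, _)) => apply: adjA; dif
 end.
Ltac adjt := rewrite ?andbT; repeat (match goal with |- is_true (_ && _) => apply/andP; split; [adj1|] end); adj1.
Ltac simp := rewrite ?inE ?mem_lay2 ?vtx_eq ?eqxx ?d01 ?d02 ?d10 ?d12 ?d20 ?d21
  ?AA'2 ?A'A2 ?notin_route ?AbA ?AAb ?BnB ?BBn ?CnC ?CCn ?Bn_inj ?Cn_inj /= ?andbF ?andbT; try done.

Definition u20 : V := (A, B, C, d2).
Definition v20 : V := (A', B, C, d0).

Definition q20 (j : I) : seq V :=
 match j with
 | None => [:: (A, B, C, d1); (A, Bn ib0, C, d1); (A, Bn ib0, C, d2)]
      ++ map (lay2 (Bn ib0) C) (route A A') ++ [:: (A', Bn ib0, C, d1); (A', B, C, d1)]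
 | Some None => [:: (A, B, C, d0); (A, B, Cn ib0, d0); (A, B, Cn ib0, d2)]
      ++ map (lay2 B (Cn ib0)) (route A A') ++ [:: (A', B, Cn ib0, d0)]
 | Some (Some ib) => if ib == ib0 then
      [::] ++ map (lay2 B C) (route A A') ++ [::]
    else [:: (Ab ib, B, C, d2); (Ab ib, B, C, d0); (Ab ib, B, Cn ib, d0); (Ab ib, B, Cn ib, d2)]
      ++ map (lay2 B (Cn ib)) (route (Ab ib) A') ++ [:: (A', B, Cn ib, d0)]
 end.

Lemma q20_N : is_path u20 v20 (rcons (q20 None) v20).
Proof.
apply: shape_gen; rewrite /u20 /v20 //=.
- rewrite /lay2; adjt.
- rewrite /lay2; adjt.
- simp.
- simp.
Qed.

Lemma q20_SN : is_path u20 v20 (rcons (q20 (Some None)) v20).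
Proof.
apply: shape_gen; rewrite /u20 /v20 //=.
- rewrite /lay2; adjt.
- rewrite /lay2; adjt.
- simp.
- simp.
Qed.

Lemma q20_S0 : is_path u20 v20 (rcons (q20 (Some (Some ib0))) v20).
Proof.
rewrite /q20 eqxx; apply: shape_gen; rewrite /u20 /v20 //=.
- rewrite /lay2; adjt.
- simp.
- simp.
Qed.

Lemma q20_S ib : ib != ib0 -> is_path u20 v20 (rcons (q20 (Some (Some ib))) v20).
Proof.
move=> ne; have ne1 := negbTE ne; have ne2 : (ib0 == ib) = false by rewrite eq_sym.
have ne3 := AbA' ne.
rewrite /q20 ne1; apply: shape_gen; rewrite /u20 /v20 //=.
- rewrite /lay2; adjt.
- rewrite /lay2; adjt.
- simp; rewrite ?ne1 ?ne2 ?ne3 //.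
- simp; rewrite ?ne1 ?ne2 ?ne3 //.
Qed.

Definition tag20 (x : V) : I :=
  let: (X, B', C', l) := x in
  if l == d1 then None
  else if B' == B then
    if C' == C then
      (if l == d2 then (if pickA X is Some ib then Some (Some ib) else Some (Some ib0))
       else if X == A then Some None else optS (pickA X))
    else if C' == Cn ib0 then Some None else optS (pickC C')
  else None.

Ltac tsimp := rewrite /= ?eqxx ?d01 ?d02 ?d10 ?d12 ?d20 ?d21 ?BnB ?BBn ?CnC ?CCn
   ?Bn_inj ?Cn_inj ?pickA_Ab ?AbA ?pickC_Cn /= ?eqxx.

Lemma q20_tag j : all (fun x => tag20 x == j) (q20 j).
Proof.
case: j => [[ib|]|]; rewrite /q20; last first.
- rewrite !all_cat; apply/and3P; split; [tsimp; done | apply: all_mapT => X; tsimp; done | tsimp; done].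
- rewrite !all_cat; apply/and3P; split; [tsimp; done | apply: all_mapT => X; tsimp; done | tsimp; done].
case: ifP => [/eqP -> | ne1].
- rewrite cat0s cats0 hR map_cons /=; apply/andP; split.
    by rewrite /= !eqxx pickA_Ab /= !eqxx.
  apply/allP => x /mapP [W hW ->]; by rewrite /= !eqxx pickA_rest /= ?eqxx.
- have ne2 : (ib0 == ib) = false by rewrite eq_sym ne1.
  rewrite !all_cat; apply/and3P; split; [tsimp; rewrite ?ne1 ?ne2 /= ?eqxx ?pickC_Cn; done
  | apply: all_mapT => X; tsimp; rewrite ?ne1 ?ne2 /= ?pickC_Cn ?eqxx; done | tsimp; rewrite ?ne1 ?ne2 /= ?pickC_Cn ?eqxx; done].
Qed.

Lemma q20_path j : is_path u20 v20 (rcons (q20 j) v20).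
Proof.
case: j => [[ib|]|]; [|exact: q20_SN|exact: q20_N].
case: (eqVneq ib ib0) => [->|ne]; [exact: q20_S0 | exact: q20_S].
Qed.

Lemma q20_size j : size (rcons (q20 j) v20) <= r + 6.
Proof.
case: j => [[ib|]|]; rewrite /q20; try case: ifP => _;
  (apply: leq_trans (size_gen _ _ _ _ _ _) _; rewrite /= addnC leq_add2l //).
Qed.

Lemma case20 : exists P : seq (seq V),
  [/\ size P = 2 * r + 2, int_disjoint_paths u20 v20 P &
      forall p, p \in P -> size p <= r + 6].
Proof.
exists [seq rcons (q20 j) v20 | j <- enum {: I}]; split.
- rewrite size_map -cardE !card_option card_prod card_ord card_bool; lia.
- apply: (tag_disj (tag:=tag20)).
  + exact: enum_uniq.
  + by move=> j _; apply: q20_path.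
  + move=> j _; case: j => [[ib|]|] //=; case: ifP => // _.
    by rewrite hR.
  + by move=> j _ x hx; apply/eqP; move/allP: (q20_tag j); apply.
- by move=> p /mapP [j _ ->]; apply: q20_size.
Qed.

End Case20.

Section Rev.
Variables r s t : nat.
Local Notation V := (e3c_vertex r s t).

Definition revp (v : V) (p : seq V) := rev (belast v p).

Lemma revp_rcons (v u : V) m : revp v (rcons m u) = rcons (rev m) v.
Proof. by rewrite /revp belast_rcons rev_cons. Qed.

Lemma is_path_rev (u v : V) m : is_path v u (rcons m u) -> is_path u v (rcons (rev m) v).
Proof.
case/and3P => hp _ hu; apply/and3P; split.
- have := rev_path (@e3c_adj r s t) v (rcons m u).
  rewrite last_rcons belast_rcons rev_cons => ->.
  by apply: sub_path hp => x y; rewrite adj_sym.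
- by rewrite last_rcons.
- by rewrite -rcons_cons -rev_rcons -rev_cons rev_uniq.
Qed.

Lemma rev_disj (u v : V) P : u != v -> int_disjoint_paths v u P ->
  int_disjoint_paths u v (map (revp v) P).
Proof.
move=> ne /and3P [Hall Hu Hf].
have H p : p \in P -> exists m, p = rcons m u.
  move=> /(allP Hall) /and3P [_ hl _]; move: hl; case/lastP: p => [|m x] /=.
    by rewrite eq_sym (negbTE ne).
  by rewrite last_rcons => /eqP ->; exists m.
apply/and3P; split.
- apply/allP => p' /mapP [p hp ->]; have [m E] := H p hp; subst p.
  by rewrite revp_rcons; apply: is_path_rev; apply: (allP Hall).
- rewrite map_inj_in_uniq // => p p' hp hp'.
  have [m ->] := H p hp; have [m' ->] := H p' hp'.
  by rewrite !revp_rcons => /rcons_inj [/(congr1 rev)]; rewrite !revK => ->.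
- apply/forallP => i; apply/forallP => j; apply/implyP => nij.
  have hi : i < size P by case: (i) => i' /=; rewrite size_map.
  have hj : j < size P by case: (j) => j' /=; rewrite size_map.
  have := forallP (forallP Hf (Ordinal hi)) (Ordinal hj).
  rewrite -(inj_eq val_inj) /= (inj_eq val_inj) in nij *.
  rewrite nij /= !(nth_map [::]) //.
  have [m Em] := H _ (mem_nth [::] hi); have [m' Em'] := H _ (mem_nth [::] hj).
  rewrite Em Em' !revp_rcons !interior_rcons has_rev.
  move=> x; apply: contra x => /hasP [y hy hy']; apply/hasP; exists y => //; move: hy'; rewrite /= mem_rev.
  by [].
Qed.

Lemma size_revp (v : V) p : size (revp v p) = size p.
Proof. by rewrite /revp size_rev size_belast. Qed.
End Rev.

Definition sw (d : 'I_3) : 'I_3 := if val d == 0 then d1 else if val d == 1 then d0 else d.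

Lemma sw_inv d : sw (sw d) = d.
Proof. by case: d => [[|[|[|?]]] ?] //; apply: val_inj. Qed.
Lemma sw_0 d : (val (sw d) == 0) = (val d == 1).
Proof. by case: d => [[|[|[|?]]] ?]. Qed.
Lemma sw_1 d : (val (sw d) == 1) = (val d == 0).
Proof. by case: d => [[|[|[|?]]] ?]. Qed.
Lemma sw_2 d : (val (sw d) == 2) = (val d == 2).
Proof. by case: d => [[|[|[|?]]] ?]. Qed.

Definition swp r s t (x : e3c_vertex r s t) : e3c_vertex r t s :=
  let: (A, B, C, d) := x in (A, C, B, sw d).

Lemma swpK r s t (x : e3c_vertex r s t) : swp (swp x) = x.
Proof. by case: x => [[[A B] C] d]; rewrite /= sw_inv. Qed.

Lemma swp_inj r s t : injective (@swp r s t).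
Proof. exact: can_inj (@swpK r s t). Qed.

Lemma adj_swp r s t (x y : e3c_vertex r s t) : e3c_adj (swp x) (swp y) = e3c_adj x y.
Proof.
rewrite /e3c_adj (inj_eq (@swp_inj r s t)); congr (_ && _).
move: x y => [[[A B] C] d] [[[A' B'] C'] d'].
rewrite /vA /vB /vC /vd /= !sw_0 !sw_1 !sw_2 (inj_eq (can_inj sw_inv)).
rewrite (_ : forall x y z w : bool, [|| x, y, z | w] = [|| x, z, y | w]); last by do 4!case.
congr [|| _, _, _ | _]; by rewrite (andbCA (C == C')).
Qed.

Lemma map_disj r s t r' s' t' (f : e3c_vertex r s t -> e3c_vertex r' s' t') u v P :
  injective f -> (forall x y, e3c_adj x y -> e3c_adj (f x) (f y)) ->
  int_disjoint_paths u v P -> int_disjoint_paths (f u) (f v) (map (map f) P).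
Proof.
move=> fi fa /and3P [Hall Hu Hf]; apply/and3P; split.
- apply/allP => p' /mapP [p hp ->]; case/and3P: (allP Hall p hp) => h1 h2 h3.
  apply/and3P; split.
  + by rewrite path_map; apply: sub_path h1 => x y /fa.
  + by rewrite last_map (eqP h2).
  + by rewrite -map_cons map_inj_uniq.
- by rewrite map_inj_uniq // => p q; apply: inj_map.
- apply/forallP => i; apply/forallP => j; apply/implyP => nij.
  have hi : i < size P by case: (i) => i' /=; rewrite size_map.
  have hj : j < size P by case: (j) => j' /=; rewrite size_map.
  have := forallP (forallP Hf (Ordinal hi)) (Ordinal hj).
  rewrite -(inj_eq val_inj) /= (inj_eq val_inj) in nij *.
  rewrite nij /= !(nth_map [::]) // /interior !(size_map f) -!map_take has_map.
  move=> x; apply: contra x => /hasP [y hy hy']; apply/hasP; exists y => //.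
  by move: hy'; rewrite /= mem_map.
Qed.

Definition good r s t (u v : e3c_vertex r s t) (k : nat) :=
  exists P : seq (seq (e3c_vertex r s t)),
    [/\ size P = 2 * r + 2, int_disjoint_paths u v P & forall p, p \in P -> size p <= r + k].

Lemma good_rev r s t (u v : e3c_vertex r s t) k : u != v -> good v u k -> good u v k.
Proof.
move=> ne [P [h1 h2 h3]]; exists (map (revp v) P); split.
- by rewrite size_map.
- exact: rev_disj.
- by move=> p /mapP [q hq ->]; rewrite size_revp; apply: h3.
Qed.

Lemma good20 r s t (hrs : r <= s) (hrt : r <= t) (A A' : word r) (B : word s) (C : word t) :
  A != A' -> good ((A, B, C, d2) : e3c_vertex r s t) (A', B, C, d0) 6.
Proof.
move=> hAA; have [Z [rest [hR [hd hrest]]]] := route_cons hAA.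
have [i [b hZ]] := differ1_ex hd.
have hR' : route A A' = Ab A (i, b) :: rest by rewrite hR hZ.
exact: (case20 hrs hrt B C hAA hR' hrest).
Qed.

Lemma good21 r s t (hrs : r <= s) (hrt : r <= t) (A A' : word r) (B : word s) (C : word t) :
  A != A' -> good ((A, B, C, d2) : e3c_vertex r s t) (A', B, C, d1) 6.
Proof.
move=> hAA; have [P [h1 h2 h3]] := good20 hrt hrs C B hAA.
exists (map (map (@swp r t s)) P); split.
- by rewrite size_map.
- have := map_disj (@swp_inj r t s) _ h2; apply => x y; by rewrite adj_swp.
- by move=> p /mapP [q hq ->]; rewrite size_map; apply: h3.
Qed.

Lemma good01 r s t (hrs : r <= s) (hrt : r <= t) (A A' : word r) (B : word s) (C : word t) :
  0 < r -> A != A' -> good ((A, B, C, d0) : e3c_vertex r s t) (A', B, C, d1) 8.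
Proof.
move=> r0 hAA; exact: (case01 hrs hrt B C (Ordinal r0, false) hAA).
Qed.

Theorem lemma18 (r s t : nat) (u v : e3c_vertex r s t) :
  1 <= r -> r <= s -> s <= t ->
  vA u != vA v -> vB u = vB v -> vC u = vC v -> vd u != vd v ->
  exists P : seq (seq (e3c_vertex r s t)),
    [/\ size P = 2 * r + 2,
        int_disjoint_paths u v P,
        (dset_is u v 0 1 -> forall p, p \in P -> size p <= r + 8) &
        (dset_is u v 0 2 || dset_is u v 1 2 ->
           forall p, p \in P -> size p <= r + 6)].
Proof.
move=> r0 hrs hst; have hrt := leq_trans hrs hst.
move: u v => [[[A B] C] d] [[[A' B'] C'] d']; rewrite /vA /vB /vC /vd /=.
move=> hAA <- <- hd.
have hA'A : A' != A by rewrite eq_sym.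
have Huv (x y : e3c_vertex r s t) : x.2 != y.2 -> x != y.
  by apply: contra => /eqP ->.
have fin8 (x y : e3c_vertex r s t) : good x y 8 -> dset_is x y 0 2 || dset_is x y 1 2 = false ->
   exists P : seq (seq (e3c_vertex r s t)),
    [/\ size P = 2 * r + 2, int_disjoint_paths x y P,
        (dset_is x y 0 1 -> forall p, p \in P -> size p <= r + 8) &
        (dset_is x y 0 2 || dset_is x y 1 2 -> forall p, p \in P -> size p <= r + 6)].
  by move=> [P [h1 h2 h3]] e; exists P; split => //; rewrite e.
have fin6 (x y : e3c_vertex r s t) : good x y 6 -> dset_is x y 0 1 = false ->
   exists P : seq (seq (e3c_vertex r s t)),
    [/\ size P = 2 * r + 2, int_disjoint_paths x y P,
        (dset_is x y 0 1 -> forall p, p \in P -> size p <= r + 8) &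
        (dset_is x y 0 2 || dset_is x y 1 2 -> forall p, p \in P -> size p <= r + 6)].
  by move=> [P [h1 h2 h3]] e; exists P; split => //; rewrite e.
case: d hd => [[|[|[|?]]] hd0] //; case: d' => [[|[|[|?]]] hd1] // _.
- have -> : Ordinal hd0 = d0 by apply: val_inj.
  have -> : Ordinal hd1 = d1 by apply: val_inj.
  by apply: fin8 => //; apply: good01.
- have -> : Ordinal hd0 = d0 by apply: val_inj.
  have -> : Ordinal hd1 = d2 by apply: val_inj.
  apply: fin6 => //; apply: good_rev; first by apply: Huv.
  exact: good20.
- have -> : Ordinal hd0 = d1 by apply: val_inj.
  have -> : Ordinal hd1 = d0 by apply: val_inj.
  apply: fin8 => //; apply: good_rev; first by apply: Huv.
  exact: good01.
- have -> : Ordinal hd0 = d1 by apply: val_inj.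
  have -> : Ordinal hd1 = d2 by apply: val_inj.
  apply: fin6 => //; apply: good_rev; first by apply: Huv.
  exact: good21.
- have -> : Ordinal hd0 = d2 by apply: val_inj.
  have -> : Ordinal hd1 = d0 by apply: val_inj.
  by apply: fin6 => //; apply: good20.
- have -> : Ordinal hd0 = d2 by apply: val_inj.
  have -> : Ordinal hd1 = d1 by apply: val_inj.
  by apply: fin6 => //; apply: good21.
Qed.
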